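(* Let $T\ge1$ and let $d_1,\dots,d_T\in\{0,1,2,\dots\}$ satisfy $t+d_t\le T$ for all $t\in[T]$. For $t\in[T]$ let $m_t=\{\tau\in[t-1]:\tau+d_\tau\ge t\}$ and $\sigma_{\max}=\max_{t\in[T]}|m_t|$. For $S\subseteq[T]$ let $d_{\mathrm{tot}}(S)=\sum_{\tau\in S}d_\tau$ and $\bar S=[T]\setminus S$. Then $$\sigma_{\max}\le2\sqrt2\min_{S\subseteq[T]}\left(|S|+\sqrt{d_{\mathrm{tot}}(\bar S)}\right).$$
   Context: $[k]=\{1,\dots,k\}$, $[0]=\emptyset$. The set $m_t$ consists of the rounds before $t$ whose feedback (revealed at the end of round $\tau+d_\tau$) has not been received before round $t$. *)

(* Defs.v *)
From mathcomp Require Import all_boot all_order all_algebra.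
Set Implicit Arguments. Unset Strict Implicit. Unset Printing Implicit Defensive.
Import Order.TTheory GRing.Theory Num.Theory.

(* Convention: round t in [T] = {1..T} is represented by i : 'I_T with t = i+1.
   d i is the delay d_t of round t = i+1. *)

Definition missing (T : nat) (d : 'I_T -> nat) (i : 'I_T) : {set 'I_T} :=
  [set j : 'I_T | (j < i)%N && (i.+1 <= j.+1 + d j)%N].

Definition sigma_max (T : nat) (d : 'I_T -> nat) : nat :=
  \max_(i : 'I_T) #|missing d i|.

Definition dtot (T : nat) (d : 'I_T -> nat) (S : {set 'I_T}) : nat :=
  \sum_(j in S) d j.

(* Main.v *)
Require Import Defs.
From mathcomp Require Import all_boot all_order all_algebra.
From mathcomp Require Import zify lra.
Import Order.TTheory GRing.Theory Num.Theory.
Local Open Scope ring_scope.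

Lemma foldmax_in (s : seq nat) : s != [::] -> foldr maxn 0%N s \in s.
Proof.
elim: s => [//|x s IH] _.
rewrite [foldr _ _ _]/=.
have [->|ns] := eqVneq s [::]; first by rewrite /= maxn0 inE.
have H := IH ns.
rewrite inE; case: (leqP x (foldr maxn 0%N s)) => h;  idtac.
  by rewrite H orbT.
by rewrite eqxx.
Qed.

Lemma foldmax_ge (s : seq nat) x : x \in s -> (x <= foldr maxn 0 s)%N.
Proof.
elim: s => [//|y s IH]; rewrite inE /= => /orP [/eqP->|/IH h].
  exact: leq_maxl.
exact: leq_trans h (leq_maxr _ _).
Qed.

Lemma sumn_uniq n (s : seq nat) : size s = n -> uniq s ->
  (n * n.-1 <= 2 * sumn s)%N.
Proof.
elim: n s => [|n IH] s hs hu; first by [].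
have s0 : s != [::] by move: hs hu; case: s.
set m := foldr maxn 0%N s.
have ms : m \in s by exact: foldmax_in.
have pe := perm_to_rem ms.
have hsum : sumn s = (m + sumn (rem m s))%N by rewrite (perm_sumn pe).
have hsz : size (rem m s) = n by rewrite size_rem // hs.
have hu' : uniq (rem m s) by exact: rem_uniq.
have IH' := IH _ hsz hu'.
have hm : (size s <= m.+1)%N.
  have -> : m.+1 = size (iota 0 m.+1) by rewrite size_iota.
  apply: uniq_leq_size hu _ => x hx; rewrite mem_iota /= add0n ltnS.
  exact: foldmax_ge.
rewrite hsum /=; rewrite hs in hm.
move: IH IH' hsz hm; clear hs; case: n => [|n] _ IH' _ hm /=; first by lia.
simpl in IH'. nia.
Qed.

Theorem lemmaA7 (R : rcfType) (T : nat) (hT : (1 <= T)%N) (d : 'I_T -> nat)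
  (hd : forall i : 'I_T, (i.+1 + d i <= T)%N) :
  forall S : {set 'I_T},
    (sigma_max d)%:R <= 2 * Num.sqrt 2 *
      ((#|S|)%:R + Num.sqrt ((dtot d (~: S))%:R) : R).
Proof.
move=> S.
have cT : (0 < #|'I_T|)%N by rewrite card_ord.
have [i0 hi0] := bigop.eq_bigmax (fun i => #|missing d i|) cT.
rewrite /sigma_max hi0.
set M := missing d i0.
set A := M :\: S.
set k := #|A|.
set D := dtot d (~: S).
have h1 : (#|M| <= #|S| + k)%N.
  rewrite -(cardsID S M) leq_add2r; apply: subset_leq_card; exact: subsetIr.
have hA : forall j, j \in A -> (j < i0)%N /\ (i0.+1 <= j.+1 + d j)%N.
  by move=> j; rewrite !inE => /andP [_ /andP [a b]].
have h2 : (k * k <= 2 * D)%N.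
  set s := [seq (i0 - (nat_of_ord j).+1)%N | j : 'I_T <- enum A].
  have hs : size s = k by rewrite size_map -cardE.
  have hu : uniq s.
    rewrite map_inj_in_uniq ?enum_uniq // => j j' hj hj'.
    rewrite !mem_enum in hj hj'.
    have [a _] := hA _ hj; have [a' _] := hA _ hj' => e.
    apply: val_inj => /=; lia.
  have := @sumn_uniq k s hs hu.
  have -> : sumn s = (\sum_(j in A) (i0 - j.+1))%N.
    by rewrite sumnE big_map big_enum.
  have e2 : (\sum_(j in A) (i0 - j.+1) + k <= \sum_(j in A) d j)%N.
    rewrite /k -sum1_card -big_split /=; apply: leq_sum => j hj.
    have [a b] := hA _ hj; lia.
  have e3 : (\sum_(j in A) d j <= D)%N.
    rewrite /D /dtot [X in (_ <= X)%N](big_setID A) /=.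
    have -> : ~: S :&: A = A.
      apply/setP => j; rewrite !inE; case: (j \in S); by rewrite ?andbF.
    exact: leq_addr.
  move=> h; have : (k * k.-1 + 2 * k <= 2 * D)%N by lia.
  case: (k) => [|k'] /=; nia.
have hk : (k%:R : R) <= Num.sqrt 2 * Num.sqrt (D%:R).
  rewrite -sqrtrM ?ler0n //.
  have -> : (k%:R : R) = Num.sqrt ((k%:R) ^+ 2).
    by rewrite sqrtr_sqr ger0_norm ?ler0n.
  rewrite ler_sqrt; last by rewrite mulr_ge0 ?ler0n.
  by rewrite -natrX -(natrM R 2 D) ler_nat expnS expn1.
have hM : (#|M|%:R : R) <= #|S|%:R + Num.sqrt 2 * Num.sqrt (D%:R).
  apply: le_trans (_ : (#|S| + k)%:R <= _); first by rewrite ler_nat.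
  by rewrite natrD lerD2l.
have s1 : 1 <= Num.sqrt (2 : R).
  by rewrite -{1}sqrtr1 ler_sqrt // ler1n.
have sD : 0 <= Num.sqrt (D%:R : R) := sqrtr_ge0 _.
have sS : 0 <= (#|S|%:R : R) := ler0n _ _.
move: hM s1 sD sS.
set a := Num.sqrt (2 : R); set b := Num.sqrt (D%:R : R); set c := (#|S|%:R : R).
move=> hM s1 sD sS; nra.
Qed.
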